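(* Let $f\colon X\to X$ be a piecewise $\lambda$-contraction and $x_0\in X$. If $\Omega(f)\cap S(f)=\emptyset$, then there exists $n\in\mathbb{N}$ such that every regular point of order $n$ of $f$ is a regular point and $\mathscr{C}^{(n)}$ is strongly invariant.
   Context: $(X,d)$ is a compact metric space whose open balls are connected, with $\mathrm{diam}(X)>0$, and $\lambda\in(0,1)$. A piecewise $\lambda$-contraction $f$: there exist $N\in\mathbb{N}$, open connected pairwise disjoint $A_1,\dots,A_N\subset X$ with dense union $X'$, and bi-Lipschitz $\varphi_i\colon X\to X$ with Lipschitz constant $\le\lambda$, $f|_{A_i}=\varphi_i|_{A_i}$; $S(f)=X\setminus X'$. $x$ is regular of order $n$ if $f^j(x)\notin S(f)$ for $0\le j<n$, regular if for all $n$. $\mathcal{I}_n(f)$ is the set of tuples $(i_0,\dots,i_{n-1})$ such that some regular point $x$ of order $n$ has $f^j(x)\in A_{i_j}$ for $0\le j<n$. For $\alpha=(i_0,\dots,i_{n-1})$, $\varphi^\alpha=\varphi_{i_{n-1}}\circ\cdots\circ\varphi_{i_0}$ and $\Omega(f)=\bigcap_{m\ge1}\overline{\bigcup_{n\ge m}\{\varphi^\alpha(x_0):\alpha\in\mathcal{I}_n(f)\}}$. $\mathscr{C}^{(1)}=\{A_i\}$, and for $n\ge2$, $\mathscr{C}^{(n)}$ is the collection of the nonempty open sets $A^\alpha=A_{i_0}\cap\varphi_{i_0}^{-1}(A_{i_1})\cap\cdots\cap(\varphi_{i_{n-2}}\circ\cdots\circ\varphi_{i_0})^{-1}(A_{i_{n-1}})$,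 $\alpha\in\mathcal{I}_n(f)$. A collection $\mathscr{C}$ of finitely many pairwise disjoint subsets of $X$ is strongly invariant if there is $n_0\ge1$ such that: (i) for each $A\in\mathscr{C}$ there is $A'\in\mathscr{C}$ with $f(A)\subset A'$; (ii) for each $B\in\mathscr{C}$ and $n\ge n_0$ there is $B'\in\mathscr{C}$ with $\overline{f^n(B)}\subset B'$; (iii) each $C\in\mathscr{C}$ is contained in some $A_i$. *)

(* Defs.v *)
From HB Require Import structures.
From mathcomp Require Import all_boot all_order all_algebra.
From mathcomp Require Import all_classical all_reals all_analysis.
Set Implicit Arguments. Unset Strict Implicit. Unset Printing Implicit Defensive.
Import Order.TTheory GRing.Theory Num.Theory.
Local Open Scope classical_set_scope.
Local Open Scope ring_scope.

Section PiecewiseContraction.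
Context {R : realType} {X : metricType R}.

Definition standing_space : Prop :=
  [/\ compact [set: X],
      (forall (x : X) (e : R), 0 < e -> connected (ball x e)) &
      exists x y : X, 0 < mdist x y].

Definition bilip_contr (lam : R) (phi : X -> X) : Prop :=
  exists2 c : R, 0 < c &
    forall x y : X, c * mdist x y <= mdist (phi x) (phi y) /\
                    mdist (phi x) (phi y) <= lam * mdist x y.

Definition piecewise_contraction (lam : R) (N : nat) (A : 'I_N -> set X)
    (phi : 'I_N -> X -> X) (f : X -> X) : Prop :=
  [/\ (forall i, open (A i) /\ connected (A i)),
      (forall i j, i != j -> A i `&` A j = set0),
      closure (\bigcup_i A i) = [set: X],
      (forall i, bilip_contr lam (phi i)) &
      (forall i x, A i x -> f x = phi i x)].

Variables (N : nat) (A : 'I_N -> set X) (phi : 'I_N -> X -> X) (f : X -> X).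

Definition Xp : set X := \bigcup_i A i.
Definition Sf : set X := ~` Xp.

Definition regular_order (n : nat) (x : X) : Prop :=
  forall j, (j < n)%N -> ~ Sf (iter j f x).
Definition regular (x : X) : Prop := forall n, regular_order n x.

Fixpoint follows (alpha : seq 'I_N) (x : X) : Prop :=
  match alpha with
  | [::] => True
  | i :: a => A i x /\ follows a (f x)
  end.

Definition In (n : nat) : set (seq 'I_N) :=
  [set alpha | size alpha = n /\ exists x, regular_order n x /\ follows alpha x].

Fixpoint phi_seq (alpha : seq 'I_N) (x : X) : X :=
  match alpha with
  | [::] => x
  | i :: a => phi_seq a (phi i x)
  end.

Definition Omega (x0 : X) : set X :=
  \bigcap_(m in [set m : nat | (1 <= m)%N])
    closure (\bigcup_(n in [set n : nat | (m <= n)%N])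
               [set phi_seq alpha x0 | alpha in In n]).

Fixpoint Aalpha (alpha : seq 'I_N) : set X :=
  match alpha with
  | [::] => [set: X]
  | i :: a => A i `&` (phi i @^-1` Aalpha a)
  end.

Definition Cn (n : nat) : set (set X) :=
  [set B | (n = 1%N /\ exists i, B = A i) \/
           ((2 <= n)%N /\ exists2 alpha, In n alpha & B = Aalpha alpha /\ B !=set0)].

Definition strongly_invariant (C : set (set X)) : Prop :=
  [/\ finite_set C,
      (forall B B', C B -> C B' -> B <> B' -> B `&` B' = set0) &
      exists2 n0 : nat, (1 <= n0)%N &
        [/\ (forall B, C B -> exists2 B', C B' & f @` B `<=` B'),
            (forall B n, C B -> (n0 <= n)%N ->
               exists2 B', C B' & closure (iter n f @` B) `<=` B') &
            (forall B, C B -> exists i, B `<=` A i)]].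

End PiecewiseContraction.

(* Main.v *)
Require Import Defs.
From HB Require Import structures.
From mathcomp Require Import all_boot all_order all_algebra.
From mathcomp Require Import all_classical all_reals all_analysis.
Import Order.TTheory GRing.Theory Num.Theory.
Set Implicit Arguments. Unset Strict Implicit.
Local Open Scope classical_set_scope.
Local Open Scope ring_scope.

Section Basics.
Context {R : realType} {X : metricType R}.
Variables (N : nat) (A : 'I_N -> set X) (phi : 'I_N -> X -> X) (f : X -> X).
Hypothesis Hdisj : forall i j, i != j -> A i `&` A j = set0.
Hypothesis Hf : forall i x, A i x -> f x = phi i x.

Lemma follows_Aalpha w x : follows A f w x <-> Aalpha A phi w x.
Proof.
elim: w x => [|i w IH] x /=; first by [].
split=> [[Ax Fw]|[Ax Aw]]; split => //.
  by rewrite /preimage /= -(Hf Ax); apply/IH.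
by apply/IH; rewrite (Hf Ax).
Qed.

Lemma follows_iter w x : follows A f w x -> iter (size w) f x = phi_seq phi w x.
Proof.
elim: w x => [|i w IH] x //= [Ax Fw].
by rewrite -iterS iterSr -(Hf Ax) IH.
Qed.

Lemma notSf y i : A i y -> ~ Sf A y.
Proof. by move=> Ay; apply; exists i. Qed.

Lemma follows_reg w x : follows A f w x -> regular_order A f (size w) x.
Proof.
elim: w x => [|i w IH] x //= [Ax Fw] j.
case: j => [|j] jlt; first exact: notSf Ax.
rewrite iterSr; exact: (IH _ Fw j jlt).
Qed.

Lemma follows_cat u v x :
  follows A f (u ++ v) x <-> follows A f u x /\ follows A f v (iter (size u) f x).
Proof.
elim: u x => [|i u IH] x /=; first by split => // [[]].
rewrite IH -iterSr /=; tauto.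
Qed.

Lemma reg_follows n x : regular_order A f n x -> exists w, size w = n /\ follows A f w x.
Proof.
elim: n x => [|n IH] x H; first by exists [::].
have : ~ Sf A x by apply: (H 0%N).
move/contrapT => [i _ Ax].
have [|w [sw Fw]] := IH (f x).
  by move=> j jn; rewrite -iterSr; apply: H.
by exists (i :: w); rewrite /= sw.
Qed.

Lemma In_follows w x : follows A f w x -> In A f (size w) w.
Proof. by move=> Fw; split => //; exists x; split => //; apply: follows_reg. Qed.

Lemma phi_seq_rcons w i x : phi_seq phi (rcons w i) x = phi i (phi_seq phi w x).
Proof. by elim: w x => [|j w IH] x //=. Qed.

Lemma Aalpha_disj a b : size a = size b -> a <> b ->
  Aalpha A phi a `&` Aalpha A phi b = set0.
Proof.
elim: a b => [|i a IH] [|j b] //= [sab] ab.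
apply/seteqP; split => [y [[Ai Aa] [Aj Ab]]|//].
have [ij|ij] := eqVneq i j.
  subst j; have ab' : a <> b by move=> e; apply: ab; rewrite e.
  have : (Aalpha A phi a `&` Aalpha A phi b) (phi i y) by split.
  by rewrite IH.
have : (A i `&` A j) y by split.
by rewrite Hdisj.
Qed.
End Basics.
Section Metric.
Context {R : realType} {X : metricType R}.

Lemma ballE (c : X) r : ball c r = [set y | mdist c y < r].
Proof. exact: ballEmdist. Qed.

Lemma open_ball' (c : X) r : open (ball c r).
Proof.
rewrite openE => y; rewrite ballE /= => cy.
rewrite /interior; apply/nbhs_ballP; exists (r - mdist c y); first by rewrite /= subr_gt0.
move=> z; rewrite !ballE /= => yz.
rewrite (le_lt_trans (metric_triangle c y z)) //.
by rewrite -ltrBrDl.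
Qed.

Lemma seq_bound (T : eqType) (s : seq T) (g : T -> nat) (h : T -> R) :
  (forall y, y \in s -> 0 < h y) ->
  exists M, exists2 e, 0 < e & forall y, y \in s -> (g y <= M)%N /\ e <= h y.
Proof.
elim: s => [|a s IH] H.
  by exists 0%N; exists 1 => // y; rewrite in_nil.
have [|M [e e0 He]] := IH.
  by move=> y ys; apply: H; rewrite in_cons ys orbT.
have ha : 0 < h a by apply: H; rewrite in_cons eqxx.
exists (maxn M (g a)); exists (Num.min e (h a)); first by rewrite lt_min e0 ha.
move=> y; rewrite in_cons => /orP [/eqP ->|ys].
  by split; [rewrite leq_maxr | rewrite ge_min lexx orbT].
have [gy ey] := He y ys.
by split; [rewrite (leq_trans gy) // leq_maxl | rewrite ge_min ey].
Qed.

Variables (N : nat) (A : 'I_N -> set X).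
Hypothesis Hopen : forall i, open (A i).
Hypothesis Hdisj : forall i j, i != j -> A i `&` A j = set0.

Lemma conn_piece (B : set X) : connected B -> B !=set0 ->
  (forall y, B y -> ~ Sf A y) -> exists j, B `<=` A j.
Proof.
move=> cB [c Bc] HS.
have : ~ Sf A c by apply: HS.
move/contrapT => [j _ Aj]; exists j.
suff <- : B `&` A j = B by move=> y [].
apply: cB.
- by exists c.
- by exists (A j).
- exists (~` \bigcup_(i in [set i | i != j]) A i).
    by apply: open_closedC; apply: bigcup_open => i _.
  apply/seteqP; split => y /=.
    move=> [By Ajy]; split => // [[i /= ij Aiy]].
    have : (A i `&` A j) y by split.
    by rewrite Hdisj.
  move=> [By Ny]; split => //.
  have : ~ Sf A y by apply: HS.
  move/contrapT => [i _ Aiy].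
  have [eij|ij] := eqVneq i j; first by rewrite -eij.
  by exfalso; apply: Ny; exists i.
Qed.

End Metric.

Section PCov.
Variables (R : realType) (X : metricType R) (x0 : X).
HB.instance Definition _ := isPointed.Build X x0.
Lemma cc (K : set X) : compact K -> cover_compact K.
Proof. by rewrite compact_cover. Qed.
End PCov.

Section Main.
Context {R : realType} {X : metricType R}.
Variables (lam : R) (N : nat) (A : 'I_N -> set X) (phi : 'I_N -> X -> X) (f : X -> X) (x0 : X).
Hypothesis Hsp : @standing_space R X.
Hypothesis Hlam : 0 < lam < 1.
Hypothesis Hpc : piecewise_contraction lam A phi f.
Hypothesis HOm : Omega A phi f x0 `&` Sf A = set0.

Lemma Hopen i : open (A i).
Proof. by case: Hpc => H _ _ _ _; case: (H i). Qed.
Lemma Hdisj i j : i != j -> A i `&` A j = set0.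
Proof. by case: Hpc => _ H _ _ _; apply: H. Qed.
Lemma Hf i x : A i x -> f x = phi i x.
Proof. by case: Hpc => _ _ _ _ H; apply: H. Qed.
Lemma Hcontr i x y : mdist (phi i x) (phi i y) <= lam * mdist x y.
Proof. by case: Hpc => _ _ _ H _; have [c _ Hc] := H i; exact: (Hc x y).2. Qed.
Lemma lam0 : 0 < lam. Proof. by case/andP: Hlam. Qed.
Lemma lam1 : lam < 1. Proof. by case/andP: Hlam. Qed.

Lemma phi_seq_contr w x y :
  mdist (phi_seq phi w x) (phi_seq phi w y) <= lam ^+ size w * mdist x y.
Proof.
elim: w x y => [|i w IH] x y /=; first by rewrite expr0 mul1r.
rewrite (le_trans (IH _ _)) // exprSr -mulrA ler_wpM2l //.
  by rewrite exprn_ge0 // ltW // lam0.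
exact: Hcontr.
Qed.

Lemma Dbound : exists2 D, 0 < D & forall x, mdist x0 x <= D.
Proof.
have cX : compact [set: X] by case: Hsp.
have := @cc R X x0 _ cX nat setT (fun k : nat => ball x0 k%:R).
case => [k _|x _|D' _ HD]; first exact: open_ball'.
  exists (Num.Def.archi_bound (mdist x0 x)) => //; rewrite ballE /=.
  by apply: archi_boundP; apply: mdist_ge0.
have [M [e _ He]] := @seq_bound R nat (finmap.enum_fset D') id (fun _ => 1) (fun _ _ => ltr01).
exists (M%:R + 1); first by rewrite ltr_wpDl // ler0n.
move=> x; have [k Dk] := HD x I; rewrite ballE /= => xk.
have [kM _] := He k Dk.
rewrite (le_trans (ltW xk)) // ler_wpDr // ler_nat //.
Qed.

Lemma Sep : exists M, exists2 eps, 0 < eps & forall n, (M <= n)%N ->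
  forall w, In A f n w -> forall s, Sf A s -> eps <= mdist (phi_seq phi w x0) s.
Proof.
have Hg : forall y, exists p : nat * R, Sf A y -> 0 < p.2 /\
    forall n, (p.1 <= n)%N -> forall w, In A f n w -> ~ mdist y (phi_seq phi w x0) < p.2.
  move=> y; have [Sy|nSy] := pselect (Sf A y); last by exists (0%N, 0) => /nSy.
  have nOm : ~ Omega A phi f x0 y.
    by move=> Oy; have : (Omega A phi f x0 `&` Sf A) y by []; rewrite HOm.
  move/existsNP: nOm => [m /not_implyP [m1 ncl]].
  move/existsNP: ncl => [B /not_implyP [nB nUB]].
  move/nbhs_ballP: nB => [e e0 HB].
  exists (m, e) => _; split => // n mn w Inw dy; apply: nUB.
  exists (phi_seq phi w x0); split.
    by exists n => //; exists w.
  by apply: HB; rewrite ballE.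
have [g Hg'] := choice Hg.
have cS : compact (Sf A).
  rewrite -[Sf A]setTI; apply: compact_closedI; first by case: Hsp.
  rewrite /Sf; apply: open_closedC; rewrite /Xp; apply: bigcup_open => i _.
  exact: Hopen.
have := @cc R X x0 _ cS X (Sf A) (fun y => ball y ((g y).2 / 2)).
case=> [y _|y Sy|D' sD0 HD]; first exact: open_ball'.
  exists y => //; apply: ballxx; apply: divr_gt0 => //.
  exact: (Hg' y Sy).1.
have sD' : forall y, y \in finmap.enum_fset D' -> Sf A y.
  by move=> y Dy; have := sD0 y Dy; rewrite inE.
have [|M [e e0 He]] := @seq_bound R X (finmap.enum_fset D') (fun y => (g y).1)
    (fun y => (g y).2 / 2).
  by move=> y Dy; apply: divr_gt0 => //; apply: (Hg' y (sD' y Dy)).1.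
exists M; exists e => // n Mn w Inw s Ss.
rewrite leNgt; apply/negP => hs.
have [y Dy bys] := HD s Ss.
have [gy ey] := He y Dy.
apply: ((Hg' y (sD' y Dy)).2 n (leq_trans gy Mn) w Inw).
rewrite ballE /= in bys.
rewrite (le_lt_trans (metric_triangle y s _)) //.
rewrite [X in _ < X](splitr ((g y).2)) ltrD // metric_sym.
exact: (lt_le_trans hs ey).
Qed.

Variables (D eps : R) (n0 : nat).
Hypothesis HD : forall x, mdist x0 x <= D.
Hypothesis D0 : 0 < D.
Hypothesis n02 : (2 <= n0)%N.
Hypothesis Hsep : forall n, (n0 <= n)%N -> forall w, In A f n w ->
  forall s, Sf A s -> eps <= mdist (phi_seq phi w x0) s.
Hypothesis Hsmall : forall m, (n0 <= m)%N -> lam ^+ m * (2 * D) < eps.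

Definition r m := lam ^+ m * (2 * D).

Lemma r_pos m : 0 < r m.
Proof. by rewrite /r mulr_gt0 // ?exprn_gt0 ?lam0 // mulr_gt0. Qed.

Lemma rS m : lam * r m = r m.+1.
Proof. by rewrite /r exprS mulrA. Qed.

Lemma dist_le m w y : size w = m ->
  mdist (phi_seq phi w x0) (phi_seq phi w y) <= lam ^+ m * D.
Proof.
move=> sw; rewrite (le_trans (phi_seq_contr _ _ _)) // sw ler_wpM2l //.
by rewrite exprn_ge0 // ltW // lam0.
Qed.

Lemma dist_lt m w y : size w = m ->
  mdist (phi_seq phi w x0) (phi_seq phi w y) < r m.
Proof.
move=> sw; rewrite (le_lt_trans (dist_le y sw)) // /r ltr_pM2l ?exprn_gt0 ?lam0 //.
by rewrite mulr_natl mulr2n ltrDr.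
Qed.

Lemma Ball m w : (n0 <= m)%N -> In A f m w ->
  exists j, ball (phi_seq phi w x0) (r m) `<=` A j.
Proof.
move=> nm Inw; apply: (conn_piece Hopen Hdisj).
- by case: Hsp => _ H _; apply: H; apply: r_pos.
- by exists (phi_seq phi w x0); apply: ballxx; apply: r_pos.
- move=> y; rewrite ballE /= => hy Sy.
  have := Hsep nm Inw Sy; rewrite leNgt => /negP; apply.
  exact: (lt_trans hy (Hsmall nm)).
Qed.

Lemma Fstep m w x j : size w = m -> follows A f w x ->
  ball (phi_seq phi w x0) (r m) `<=` A j -> follows A f (rcons w j) x.
Proof.
move=> sw Fw Hb.
have Aj : A j (iter m f x).
  by apply: Hb; rewrite ballE /= -sw (follows_iter Hf Fw); apply: dist_lt.
by rewrite -cats1 follows_cat sw.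
Qed.

Lemma G k : forall m w, (n0 <= m)%N -> In A f m w ->
  exists v, [/\ size v = k, In A f (m + k) (w ++ v) &
    ball (phi_seq phi w x0) (r m) `<=` Aalpha A phi v].
Proof.
elim: k => [|k IH] m w nm Inw.
  by exists [::]; rewrite addn0 cats0.
have [j Hj] := Ball nm Inw.
have Inw' : In A f m.+1 (rcons w j).
  case: Inw => sw [x [_ Fw]].
  have := In_follows (Fstep sw Fw Hj); by rewrite size_rcons sw.
have [v' [sv' Inv' Hb']] := IH _ _ (leqW nm) Inw'.
exists (j :: v'); split => //=; first by rewrite sv'.
  by rewrite -cat_rcons -addSnnS.
move=> y Hy; split; first exact: Hj.
apply: Hb'; rewrite ballE /= phi_seq_rcons -rS.
rewrite (le_lt_trans (Hcontr _ _ _)) // ltr_pM2l ?lam0 //.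
by rewrite ballE in Hy.
Qed.

Lemma reg_up m x : (n0 <= m)%N -> regular_order A f m x ->
  regular_order A f m.+1 x.
Proof.
move=> nm /(reg_follows) [w [sw Fw]].
have Inw : In A f m w by rewrite -sw; apply: (In_follows Fw).
have [j Hj] := Ball nm Inw.
have := follows_reg (Fstep sw Fw Hj); by rewrite size_rcons sw.
Qed.

Lemma regular_part x : regular_order A f n0 x -> regular A f x.
Proof.
move=> Hx.
have H : forall k, regular_order A f (n0 + k) x.
  elim => [|k IH]; first by rewrite addn0.
  by rewrite addnS; apply: reg_up => //; rewrite leq_addr.
move=> m j jm; apply: (H m j); by rewrite (leq_trans jm) // leq_addl.
Qed.

Lemma common alpha m : In A f n0 alpha -> exists u1 u2,
  [/\ size u1 = m, In A f m u1, In A f n0 u2 &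
   forall y, Aalpha A phi alpha y -> follows A f u1 y /\ follows A f u2 (iter m f y)].
Proof.
move=> Ina.
have [v [sv Inv Hb]] := G m (leqnn n0) Ina.
have [sa [x1 [_ Fx1]]] := Ina.
have Hy : forall y, Aalpha A phi alpha y -> follows A f (alpha ++ v) y.
  move=> y /(follows_Aalpha Hf) Fy; apply/follows_cat; split => //.
  apply/(follows_Aalpha Hf); apply: Hb; rewrite ballE /= (follows_iter Hf Fy).
  exact: (dist_lt _ sa).
have su : size (alpha ++ v) = (n0 + m)%N by rewrite size_cat sa sv.
have mu : (m <= size (alpha ++ v))%N by rewrite su leq_addl.
have Hy' : forall y, Aalpha A phi alpha y ->
    follows A f (take m (alpha ++ v)) y /\ follows A f (drop m (alpha ++ v)) (iter m f y).
  move=> y Ay; have := Hy y Ay.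
  by rewrite -{1}(cat_take_drop m (alpha ++ v)) follows_cat size_takel.
have Ax1 : Aalpha A phi alpha x1 by apply/(follows_Aalpha Hf).
have [Fu1 Fu2] := Hy' x1 Ax1.
exists (take m (alpha ++ v)), (drop m (alpha ++ v)); split => //.
- exact: size_takel.
- by have := In_follows Fu1; rewrite size_takel.
- by have := In_follows Fu2; rewrite size_drop su addnK.
Qed.

Lemma SI : strongly_invariant A f (Cn A phi f n0).
Proof.
have CnE : forall B, Cn A phi f n0 B ->
    exists2 alpha, In A f n0 alpha & B = Aalpha A phi alpha /\ B !=set0.
  move=> B [[n1 _]|[_ H]] //; by move: n02; rewrite n1.
have CnI : forall alpha, In A f n0 alpha -> Aalpha A phi alpha !=set0 ->
    Cn A phi f n0 (Aalpha A phi alpha).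
  by move=> alpha Ina ne; right; split => //; exists alpha.
split.
- apply: (@sub_finite_set _ _ [set Aalpha A phi (tval t) | t in [set: n0.-tuple 'I_N]]).
    move=> B /CnE [alpha [sa _] [-> _]].
    have sa' : size alpha == n0 by rewrite sa.
    by exists (Tuple sa').
  exact/finite_image/finite_finset.
- move=> B B' /CnE [a [sa _] [-> _]] /CnE [b [sb _] [-> _]] ab.
  apply: (Aalpha_disj phi Hdisj); first by rewrite sa sb.
  by move=> e; apply: ab; rewrite e.
- exists n0; first exact: (leq_trans _ n02).
  split.
  + move=> B /CnE [alpha Ina [-> [y0 Ay0]]].
    have [u1 [u2 [_ _ Inu2 Hy]]] := common 1 Ina.
    exists (Aalpha A phi u2).
      apply: CnI => //; exists (f y0); apply/(follows_Aalpha Hf); exact: (Hy y0 Ay0).2.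
    move=> _ [y Ay <-]; apply/(follows_Aalpha Hf); exact: (Hy y Ay).2.
  + move=> B m /CnE [alpha Ina [-> [y0 Ay0]]] nm.
    have [u1 [u2 [su1 Inu1 _ Hy]]] := common m Ina.
    have [v2 [sv2 Inv2 Hb2]] := G n0 nm Inu1.
    exists (Aalpha A phi v2).
      apply: CnI.
        case: Inv2 => _ [x [_ F]]; move/follows_cat: F => [_ F2].
        by have := In_follows F2; rewrite sv2.
      exists (phi_seq phi u1 x0); apply: Hb2; apply: ballxx; exact: r_pos.
    move=> z cz; apply: Hb2.
    have e0 : 0 < lam ^+ m * D by rewrite mulr_gt0 // exprn_gt0 // lam0.
    have [p [[y By <-] bz]] := cz _ (nbhsx_ballx z _ e0).
    rewrite ballE /= in bz *.
    have [Fy _] := Hy y By.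
    rewrite -su1 (follows_iter Hf Fy) su1 in bz.
rewrite ballE /=.     rewrite (le_lt_trans (metric_triangle _ (phi_seq phi u1 y) _)) //.
    have -> : r m = lam ^+ m * D + lam ^+ m * D by rewrite /r mulr_natl mulr2n mulrDr.
    apply: ler_ltD; first exact: (dist_le y su1).
    by rewrite metric_sym.
  + move=> B /CnE [[|i a] [sa _] [-> _]]; first by move: n02; rewrite -sa.
    by exists i => y [].
Qed.

End Main.


Unset Implicit Arguments. Set Strict Implicit.

Theorem lemma3p6 (R : realType) (X : metricType R) (lam : R) (N : nat)
    (A : 'I_N -> set X) (phi : 'I_N -> X -> X) (f : X -> X) (x0 : X) :
  @standing_space R X -> 0 < lam < 1 ->
  piecewise_contraction lam A phi f ->
  Omega A phi f x0 `&` Sf A = set0 ->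
  exists n : nat, (0 < n)%N /\
    (forall x, regular_order A f n x -> regular A f x) /\
    strongly_invariant A f (Cn A phi f n).
Proof.
move=> Hsp Hlam Hpc HOm.
have l0 : 0 < lam by case/andP: Hlam.
have l1 : lam < 1 by case/andP: Hlam.
have [D D0 HD] := Dbound x0 Hsp.
have [M [eps eps0 Hs]] := Sep Hsp Hpc HOm.
have e0 : 0 < eps / (2 * D) by rewrite divr_gt0 // mulr_gt0.
have [i _ Hi] : exists2 i : nat, True & lam ^+ i < eps / (2 * D).
  have Hn : `|lam| < 1 by rewrite ger0_norm // ltW.
  have [i _ Hi] := cvg_expr Hn (@nbhsx_ballx R R^o 0 _ e0).
  exists i => //; have := Hi i (leqnn i).
  by rewrite /= /ball /= sub0r normrN ger0_norm // exprn_ge0 // ltW.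
pose n := maxn (maxn M i) 2.
have Mn : (M <= n)%N by rewrite /n !leq_max leqnn.
have iN : (i <= n)%N by rewrite /n !leq_max leqnn orbT.
have n2 : (2 <= n)%N by rewrite /n leq_maxr.
have Hsep : forall m, (n <= m)%N -> forall w, In A f m w ->
    forall s, Sf A s -> eps <= mdist (phi_seq phi w x0) s.
  by move=> m nm; apply: Hs; apply: leq_trans nm.
have Hsmall : forall m, (n <= m)%N -> lam ^+ m * (2 * D) < eps.
  move=> m nm.
  have lim : lam ^+ m <= lam ^+ i.
    by apply: ler_wiXn2l; rewrite ?ltW //; apply: leq_trans nm.
  rewrite (le_lt_trans (ler_wpM2r _ lim)) ?mulr_ge0 ?ltW //.
  by rewrite -ltr_pdivlMr ?mulr_gt0.
exists n; split; first exact: (leq_trans _ n2).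
split.
  by move=> x; apply: (regular_part Hsp Hlam Hpc HD D0 Hsep Hsmall).
exact: (SI Hsp Hlam Hpc HD D0 n2 Hsep Hsmall).
Qed.
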